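(* Let $G=(V,E)$ be a weighted undirected graph with $|V|=N$, let $\epsilon\in(0,1)$, $\alpha>0$, and let $S_\epsilon,S\subset V$ be nonempty proper subsets with $\mathrm{vol}(S,G)>0$ such that: (1) $|S_\epsilon|<\epsilon N$ and $\mathrm{vol}(S_\epsilon,G)<\epsilon\,\mathrm{vol}(V,G)$; (2) $\bar d(S_\epsilon,G)<\frac{1-\epsilon}{2(1+\alpha)}\bar d(S,G)$; (3) $\phi(S,G)<\frac{\alpha(1-\epsilon)}{1+\alpha}$. Let $\delta=\frac{\alpha(1-\epsilon)}{1+\alpha}-\phi(S,G)$. If $\tau>0$ satisfies $\alpha\,\bar d(S_\epsilon,G)\le\tau\le\delta\,\bar d(S,G)$, and both $\mathrm{vol}(S_\epsilon,G_\tau)\le\mathrm{vol}(V\setminus S_\epsilon,G_\tau)$ and $\mathrm{vol}(S,G_\tau)\le\mathrm{vol}(V\setminus S,G_\tau)$, then $\mathrm{CoreCut}_\tau(S)<\mathrm{CoreCut}_\tau(S_\epsilon)$.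
   Context: $w_{ij}\ge 0$ are the symmetric edge weights, $d_i=\sum_j w_{ij}$, $\mathrm{vol}(S,G)=\sum_{i\in S}d_i$, $\mathrm{cut}(S,G)=\sum_{i\in S,\,j\in V\setminus S}w_{ij}$, $\phi(S,G)=\mathrm{cut}(S,G)/\mathrm{vol}(S,G)$, and $\bar d(S,G)=\mathrm{vol}(S,G)/|S|$. $G_\tau$ is the graph with adjacency matrix entries $w_{ij}+\tau/N$ for all $i,j$, so $\mathrm{vol}(S,G_\tau)=\mathrm{vol}(S,G)+\tau|S|$. For nonempty proper $S$ with $\mathrm{vol}(S,G_\tau)\le\mathrm{vol}(V\setminus S,G_\tau)$, $\mathrm{CoreCut}_\tau(S)=\dfrac{\mathrm{cut}(S,G)+\frac{\tau}{N}|S||V\setminus S|}{\mathrm{vol}(S,G)+\tau|S|}$. *)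

(* Defs.v *)
From HB Require Import structures.
From mathcomp Require Import all_boot all_order all_algebra.
Set Implicit Arguments. Unset Strict Implicit. Unset Printing Implicit Defensive.
Import Order.TTheory GRing.Theory Num.Theory.
Local Open Scope ring_scope.

Section Graph.
Variables (R : realFieldType) (V : finType).

Definition deg (w : V -> V -> R) (i : V) : R := \sum_(j : V) w i j.
Definition vol (w : V -> V -> R) (S : {set V}) : R := \sum_(i in S) deg w i.
Definition cut (w : V -> V -> R) (S : {set V}) : R :=
  \sum_(i in S) \sum_(j in ~: S) w i j.
Definition phi (w : V -> V -> R) (S : {set V}) : R := cut w S / vol w S.
Definition dbar (w : V -> V -> R) (S : {set V}) : R := vol w S / #|S|%:R.
Definition wtau (w : V -> V -> R) (tau : R) : V -> V -> R :=
  fun i j => w i j + tau / #|V|%:R.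
Definition corecut (w : V -> V -> R) (tau : R) (S : {set V}) : R :=
  (cut w S + tau / #|V|%:R * #|S|%:R * #|~: S|%:R) / (vol w S + tau * #|S|%:R).
End Graph.

(* Main.v *)
Require Import Defs.
From HB Require Import structures.
From mathcomp Require Import all_boot all_order all_algebra.
From mathcomp Require Import ring lra.
Import Order.TTheory GRing.Theory Num.Theory.
Local Open Scope ring_scope.

Theorem corollary4p7 (R : realFieldType) (V : finType) (w : V -> V -> R)
  (w_sym : forall i j, w i j = w j i) (w_nn : forall i j, 0 <= w i j)
  (eps alpha tau : R) (Seps S : {set V})
  (heps0 : 0 < eps) (heps1 : eps < 1) (halpha : 0 < alpha)
  (hSeps_ne : Seps != set0) (hSeps_pr : Seps != setT)
  (hS_ne : S != set0) (hS_pr : S != setT)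
  (hvolS : 0 < vol w S)
  (h1a : #|Seps|%:R < eps * #|V|%:R)
  (h1b : vol w Seps < eps * vol w setT)
  (h2 : dbar w Seps < (1 - eps) / (2 * (1 + alpha)) * dbar w S)
  (h3 : phi w S < alpha * (1 - eps) / (1 + alpha))
  (htau : 0 < tau)
  (htau_lo : alpha * dbar w Seps <= tau)
  (htau_hi : tau <= (alpha * (1 - eps) / (1 + alpha) - phi w S) * dbar w S)
  (hbalSeps : vol (wtau w tau) Seps <= vol (wtau w tau) (~: Seps))
  (hbalS : vol (wtau w tau) S <= vol (wtau w tau) (~: S)) :
  corecut w tau S < corecut w tau Seps.
Proof.
set c := alpha * (1 - eps) / (1 + alpha).
have hc0 : 0 <= c.
  rewrite /c; apply: divr_ge0; last lra.
  apply: mulr_ge0; lra.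
have hcut0 : forall A : {set V}, 0 <= cut w A.
  move=> A; apply: sumr_ge0 => i _; apply: sumr_ge0 => j _; exact: w_nn.
have hvol0 : forall A : {set V}, 0 <= vol w A.
  move=> A; apply: sumr_ge0 => i _; apply: sumr_ge0 => j _; exact: w_nn.
have hN : forall A : {set V}, #|A|%:R + #|~: A|%:R = #|V|%:R :> R.
  by move=> A; rewrite -natrD cardsC.
have hs : 0 < #|S|%:R :> R by rewrite ltr0n card_gt0.
have he : 0 < #|Seps|%:R :> R by rewrite ltr0n card_gt0.
have hN0 : 0 < #|V|%:R :> R.
  have := hN S; have := ler0n R #|~: S|; lra.
have hup : corecut w tau S <= c.
  rewrite /corecut ler_pdivrMr; last by apply: addr_gt0 => //; apply: mulr_gt0.
  have hcS : cut w S = phi w S * vol w S by rewrite /phi mulfVK //; lra.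
  have hx : tau * #|S|%:R <= (c - phi w S) * vol w S.
    move: htau_hi; rewrite /dbar -/c mulrA -ler_pdivlMr //.
  have hy : tau / #|V|%:R * #|S|%:R * #|~: S|%:R <= tau * #|S|%:R.
    have -> : tau / #|V|%:R * #|S|%:R * #|~: S|%:R
          = (tau * #|S|%:R) * (#|~: S|%:R / #|V|%:R).
      by ring.
    rewrite -[X in _ <= X]mulr1 ler_pM2l; last by apply: mulr_gt0.
    rewrite ler_pdivrMr // mul1r. have := hN S; have := ler0n R #|S|; lra.
  have hcx : 0 <= c * (tau * #|S|%:R) by apply: mulr_ge0 => //; apply: mulr_ge0; lra.
  rewrite hcS; move: hx hy hcx.
  set p := phi w S; set v := vol w S; set x := tau * #|S|%:R.
  set y := tau / _ * _ * _ => hx hy hcx.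
  have -> : c * (v + x) = c * v + c * x by rewrite mulrDr.
  have : (c - p) * v = c * v - p * v by rewrite mulrBl.
  lra.
apply: (le_lt_trans hup).
rewrite /corecut ltr_pdivlMr; last by have := hvol0 Seps; have := mulr_gt0 htau he; lra.
have hlo : alpha * vol w Seps <= tau * #|Seps|%:R.
  by move: htau_lo; rewrite /dbar mulrA ler_pdivrMr.
have hfrac : (1 - eps) * #|V|%:R < #|~: Seps|%:R.
  have := hN Seps; lra.
have hz : (1 - eps) * (tau * #|Seps|%:R) < tau / #|V|%:R * #|Seps|%:R * #|~: Seps|%:R.
  have -> : tau / #|V|%:R * #|Seps|%:R * #|~: Seps|%:R
          = (tau * #|Seps|%:R) * (#|~: Seps|%:R / #|V|%:R).
    by ring.
  rewrite mulrC ltr_pM2l; last by apply: mulr_gt0.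
  by rewrite ltr_pdivlMr // mulrC.
have hcv : c * (vol w Seps + tau * #|Seps|%:R) <= (1 - eps) * (tau * #|Seps|%:R).
  rewrite /c mulrAC ler_pdivrMr; last lra.
  move: hlo; set v := vol w Seps; set x := tau * #|Seps|%:R => hlo.
  have hv : 0 <= v by apply: hvol0.
  nra.
have := hcut0 Seps; lra.
Qed.
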